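(* Let $p,q$ be positive integers and let $s_1,\dots,s_p,d_1,\dots,d_q:[0,1]\to[0,1]$ be the truth functions of the hedge connectives of FLn with many hedges; that is, writing $s_0=d_0=\mathrm{id}_{[0,1]}$, they make all hedge axioms tautologies, which means that for all $a,b\in[0,1]$: (1) $a\Rightarrow b\ \le\ h(a)\Rightarrow h(b)$ for every $h\in\{s_1,\dots,s_p,d_1,\dots,d_q\}$; (2) $s_i(a)\le s_{i-1}(a)$ for $i=1,\dots,p$; (3) $s_p(1)=1$; (4) $d_{j-1}(a)\le d_j(a)$ for $j=1,\dots,q$; (5) $d_q(0)=0$. Then for every $h\in\{s_1,\dots,s_p,d_1,\dots,d_q\}$, $h$ is non-decreasing, $h(0)=0$ and $h(1)=1$.
   Context: Truth values form the Łukasiewicz algebra on $[0,1]$ with $a\Rightarrow b=\min(1,1-a+b)$. FLn with many hedges extends the first-order fuzzy logic FLn (with logical constants $\overline{a}$ for every $a\in[0,1]$, implication $\to$, negation $\neg A\equiv A\to\overline{0}$) by unary connectives $s_1,\dots,s_p$ (truth-stressing hedges) and $d_1,\dots,d_q$ (truth-depressing hedges), with $s_0,d_0$ denoting the identity connective, and adds the logical axioms (in degree 1) $(A\to B)\to(hA\to hB)$ for all hedges $h$; $s_iA\to s_{i-1}A$ ($i=1,\dots,p$); $s_p\overline{1}$; $d_{j-1}A\to d_jA$ ($j=1,\dots,q$); $\neg d_q\overline{0}$. Conditions (1)–(5) are exactly the requirement that these axioms take truth value 1 in every structure, where a hedge $h$ is interpreted by its truth function: $\mathcal{D}(hA)=h(\mathcal{D}(A))$.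 *)

(* Defs.v *)
From Stdlib Require Import Reals.
Open Scope R_scope.

Definition in01 (a : R) : Prop := 0 <= a <= 1.

(* Lukasiewicz residuum: a => b = min(1, 1 - a + b). *)
Definition luk_imp (a b : R) : R := Rmin 1 (1 - a + b).

Definition maps01 (h : R -> R) : Prop := forall a, in01 a -> in01 (h a).

Definition hedge_compat (h : R -> R) : Prop :=
  forall a b, in01 a -> in01 b -> luk_imp a b <= luk_imp (h a) (h b).

Definition nondecr01 (h : R -> R) : Prop :=
  forall a b, in01 a -> in01 b -> a <= b -> h a <= h b.

(* Main.v *)
Require Import Defs.
From Stdlib Require Import Reals Lra Lia.
Open Scope R_scope.

Lemma chain (n : nat) (f : nat -> R) :
  (forall i, (1 <= i <= n)%nat -> f i <= f (i - 1)%nat) ->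
  forall i k, (i <= n)%nat -> (k <= i)%nat -> f i <= f (i - k)%nat.
Proof.
  intros H i k Hi. induction k as [|k IH]; intros Hk.
  - replace (i - 0)%nat with i by lia. lra.
  - assert (H1 := IH ltac:(lia)).
    assert (H2 := H (i - k)%nat ltac:(lia)).
    replace (i - k - 1)%nat with (i - S k)%nat in H2 by lia. lra.
Qed.

Lemma mono (h : R -> R) : hedge_compat h -> nondecr01 h.
Proof.
  intros H a b Ha Hb Hab. specialize (H a b Ha Hb).
  unfold luk_imp, Rmin in H.
  destruct (Rle_dec 1 (1 - a + b)); destruct (Rle_dec 1 (1 - h a + h b)); lra.
Qed.

Theorem mainTheorem1 (p q : nat) (s d : nat -> R -> R) :
  (1 <= p)%nat -> (1 <= q)%nat ->
  (forall a, s 0%nat a = a) -> (forall a, d 0%nat a = a) ->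
  (forall i, (1 <= i <= p)%nat -> maps01 (s i)) ->
  (forall j, (1 <= j <= q)%nat -> maps01 (d j)) ->
  (* (1) *)
  (forall i, (1 <= i <= p)%nat -> hedge_compat (s i)) ->
  (forall j, (1 <= j <= q)%nat -> hedge_compat (d j)) ->
  (* (2) *)
  (forall i a, (1 <= i <= p)%nat -> in01 a -> s i a <= s (i - 1)%nat a) ->
  (* (3) *)
  s p 1 = 1 ->
  (* (4) *)
  (forall j a, (1 <= j <= q)%nat -> in01 a -> d (j - 1)%nat a <= d j a) ->
  (* (5) *)
  d q 0 = 0 ->
  (forall i, (1 <= i <= p)%nat -> nondecr01 (s i) /\ s i 0 = 0 /\ s i 1 = 1) /\
  (forall j, (1 <= j <= q)%nat -> nondecr01 (d j) /\ d j 0 = 0 /\ d j 1 = 1).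
Proof.
  intros Hp Hq hs0 hd0 ms md cs cd H2 H3 H4 H5.
  assert (i0 : in01 0) by (unfold in01; lra).
  assert (i1 : in01 1) by (unfold in01; lra).
  split.
  - intros i Hi. split; [apply mono, cs; exact Hi|].
    assert (m0 := ms i Hi 0 i0). assert (m1 := ms i Hi 1 i1). unfold in01 in *.
    split.
    + assert (C := chain p (fun k => s k 0) (fun k Hk => H2 k 0 Hk i0) i i ltac:(lia) ltac:(lia)).
      simpl in C. replace (i - i)%nat with 0%nat in C by lia. rewrite hs0 in C. lra.
    + assert (C := chain p (fun k => s k 1) (fun k Hk => H2 k 1 Hk i1) p (p - i) ltac:(lia) ltac:(lia)).
      simpl in C. replace (p - (p - i))%nat with i in C by lia. lra.
  - intros j Hj. split; [apply mono, cd; exact Hj|].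
    assert (m0 := md j Hj 0 i0). assert (m1 := md j Hj 1 i1). unfold in01 in *.
    assert (G : forall a, in01 a -> forall k, (1 <= k <= q)%nat -> (fun k => - d k a) k <= (fun k => - d k a) (k - 1)%nat).
    { intros a Ha k Hk. simpl. specialize (H4 k a Hk Ha). lra. }
    split.
    + assert (C := chain q _ (G 0 i0) q (q - j) ltac:(lia) ltac:(lia)).
      simpl in C. replace (q - (q - j))%nat with j in C by lia. lra.
    + assert (C := chain q _ (G 1 i1) j j ltac:(lia) ltac:(lia)).
      simpl in C. replace (j - j)%nat with 0%nat in C by lia. rewrite hd0 in C. lra.
Qed.
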